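(* Let $\Phi:[0,\infty)\to(0,1]$ be a decreasing bijection and let $\phi=-\log\Phi$. Then \[ \int_0^1\frac{1}{u(1\vee\log\Phi^{-1}(u))}\,\mathrm{d}u=\infty \quad\text{if and only if}\quad \sum_{n=1}^\infty\frac{1}{1\vee\log\phi^{-1}(n)}=\infty. \]
   Context: $\Phi^{-1}$ and $\phi^{-1}$ denote the inverse functions of $\Phi$ and $\phi$. *)

(* Defs.v *)
From HB Require Import structures.
From mathcomp Require Import all_boot all_order all_algebra.
From mathcomp Require Export all_classical all_reals all_analysis.
Set Implicit Arguments. Unset Strict Implicit. Unset Printing Implicit Defensive.
Import Order.TTheory GRing.Theory Num.Theory.
Local Open Scope ring_scope.

Definition phi_of (R : realType) (Phi : R -> R) : R -> R := fun x => - ln (Phi x).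

(* Main.v *)
Require Import Defs.
From HB Require Import structures.
From mathcomp Require Import all_boot all_order all_algebra.
From mathcomp Require Import all_classical all_reals all_analysis.
From mathcomp Require Import ring lra measurable_realfun.
Import Order.TTheory GRing.Theory Num.Theory.
Local Open Scope classical_set_scope.
Local Open Scope ring_scope.

Theorem lemma2p2 (R : realType) (Phi Phiinv phiinv : R -> R)
  (Phi_bij : set_bij `[0, +oo[ `]0, 1] Phi)
  (Phi_decr : {in `[0, +oo[ &, forall x y : R, x <= y -> Phi y <= Phi x})
  (Phiinv_ge0 : forall u : R, 0 < u <= 1 -> 0 <= Phiinv u)
  (PhiinvK : forall u : R, 0 < u <= 1 -> Phi (Phiinv u) = u)
  (phiinv_ge0 : forall t : R, 0 <= t -> 0 <= phiinv t)
  (phiinvK : forall t : R, 0 <= t -> phi_of Phi (phiinv t) = t) :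
  (\int[@lebesgue_measure R]_(u in `]0%R, 1%R] : set R)
      ((u * Num.max 1 (ln (Phiinv u)))^-1)%:E = +oo)%E
  <->
  ((\sum_(1 <= n <oo) ((Num.max 1 (ln (phiinv n%:R)))^-1)%:E) = +oo)%E.
Proof.
have Phi_in x : 0 <= x -> 0 < Phi x <= 1.
  move=> x0; have := set_bij_homo Phi_bij; move=> /(_ x).
  have H : x \in `[0, +oo[ by rewrite in_itv /= andbT.
  by move=> /(_ H); rewrite /mkset in_itv.
have Phi_inj x y : 0 <= x -> 0 <= y -> Phi x = Phi y -> x = y.
  move=> x0 y0; apply: (set_bij_inj Phi_bij); by rewrite ?inE /mkset ?in_itv /= ?andbT.
have Phi_dec x y : 0 <= x -> 0 <= y -> x <= y -> Phi y <= Phi x.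
  by move=> x0 y0; apply: Phi_decr; rewrite in_itv /= andbT.
have Phiphi t : 0 <= t -> Phi (phiinv t) = expR (- t).
  move=> t0; have h := phiinvK _ t0; rewrite /phi_of in h.
  rewrite -{2}h opprK lnK // posrE; by have /andP[] := Phi_in _ (phiinv_ge0 _ t0).
pose M (x : R) := Num.max 1 (ln x).
have M_ge1 x : 1 <= M x by rewrite /M le_max lexx.
have M_mono x y : 0 <= x -> x <= y -> M x <= M y.
  move=> x0 xy; rewrite /M; have [->|xpos] := eqVneq x 0.
    by rewrite ln0 // ge_max !le_max lexx ler01.
  have x0' : 0 < x by rewrite lt_def xpos x0.
  have y0 : 0 < y by exact: lt_le_trans xy.
  by rewrite ge_max !le_max lexx /= ler_ln ?posrE // xy orbT.
have Phiinv_dec u v : 0 < u <= 1 -> 0 < v <= 1 -> u <= v -> Phiinv v <= Phiinv u.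
  move=> hu hv uv; rewrite leNgt; apply/negP => lt.
  have := Phi_dec _ _ (Phiinv_ge0 _ hu) (Phiinv_ge0 _ hv) (ltW lt).
  rewrite !PhiinvK // => vu.
  have euv : u = v by apply/eqP; rewrite eq_le uv vu.
  by move: lt; rewrite euv ltxx.
pose q : R := expR (-1).
pose x (k : nat) : R := expR (- k%:R).
pose F (k : nat) : set R := [set` `]x k * q, x k]].
have x0 k : 0 < x k by exact: expR_gt0.
have q0 : 0 < q by exact: expR_gt0.
have q1 : q < 1 by rewrite /q expR_lt1 ltrN10.
have xS k : x k * q = x k.+1 by rewrite /x /q -expRD -natr1 opprD.
have le_exp (u a : R) : 0 < u -> (u <= expR a) = (ln u <= a).
  by move=> u0; rewrite -{1}(lnK u0) ler_expR.
have lt_exp (u a : R) : 0 < u -> (expR a < u) = (a < ln u).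
  by move=> u0; rewrite -{1}(lnK u0) ltr_expR.
have memF k u : F k u <-> 0 < u /\ - (k%:R) - 1 < ln u <= - k%:R.
  rewrite /F /mkset in_itv /= xS; split.
    move=> /andP[h1 h2]; have u0 : 0 < u by exact: lt_trans (x0 _) h1.
    by split => //; move: h1 h2; rewrite /x lt_exp // le_exp // -natr1 opprD => -> ->.
  move=> [u0 /andP[h1 h2]]; rewrite /x lt_exp // le_exp // h2 andbT.
  by rewrite -natr1 opprD.
have bigF : [set` `]0, 1]] = \bigcup_k F k.
  apply/seteqP; split => u /=.
    rewrite /mkset in_itv /= => /andP[u0 u1].
    have l0 : 0 <= - ln u by rewrite oppr_ge0 ln_le0.
    have /andP[t1 t2] := truncn_itv l0.
    exists (Num.truncn (- ln u)) => //; apply/memF; split => //.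
    rewrite -natr1 in t2; apply/andP; split; [lra|lra].
  move=> [k _ /memF [u0 /andP[h1 h2]]]; rewrite /mkset in_itv /= u0 /=.
  rewrite -(lnK u0) -expR0 ler_expR; have : 0 <= (k%:R : R) by []. lra.
have trivF : trivIset setT F.
  apply/trivIsetP => i j _ _ ij; apply/seteqP; split => // u [/memF [u0 /andP[a1 a2]]].
  move=> /memF [_ /andP[b1 b2]].
  have [lt|lt|eq] := ltgtP i j.
  - have : (i.+1%:R : R) <= j%:R by rewrite ler_nat.
    rewrite -natr1; lra.
  - have : (j.+1%:R : R) <= i%:R by rewrite ler_nat.
    rewrite -natr1; lra.
  - by move: ij; rewrite eq eqxx.
have Phiinv_F k u : F k u -> phiinv k%:R <= Phiinv u <= phiinv k.+1%:R.
  move=> /memF [u0 /andP[h1 h2]].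
  have u1 : 0 < u <= 1.
    rewrite u0 /= -(lnK u0) -expR0 ler_expR; have : 0 <= (k%:R : R) by []. lra.
  have P0 := Phiinv_ge0 _ u1.
  apply/andP; split.
    rewrite leNgt; apply/negP => lt.
    have := Phi_dec _ _ P0 (phiinv_ge0 _ (ler0n R k)) (ltW lt).
    rewrite PhiinvK // Phiphi // => le1.
    have le2 : u <= expR (- k%:R) by rewrite le_exp.
    have eu : u = expR (- k%:R) by apply/eqP; rewrite eq_le le1 le2.
    have := Phi_inj _ _ P0 (phiinv_ge0 _ (ler0n R k)).
    rewrite PhiinvK // Phiphi // => /(_ eu) eq.
    by move: lt; rewrite eq ltxx.
  rewrite leNgt; apply/negP => lt.
  have := Phi_dec _ _ (phiinv_ge0 _ (ler0n R k.+1)) P0 (ltW lt).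
  rewrite PhiinvK // Phiphi // le_exp //.
  rewrite -natr1; lra.
have xk1 k : x k <= 1 by rewrite /x -expR0 ler_expR oppr_le0.
have xSk k : x k.+1 <= x k by rewrite -xS ger_pMr // ltW.
have Mpos (y : R) : 0 < M y by exact: lt_le_trans ltr01 (M_ge1 y).
have inF k u : F k u -> x k.+1 < u <= x k by rewrite /F /mkset in_itv /= xS.
have mF k : measurable_fun (F k) (EFin \o (fun u : R => (u * M (Phiinv u))^-1)).
  pose c u := Num.max (x k.+1) (Num.min (x k) u).
  have c_in u : 0 < c u <= 1.
    apply/andP; split; first by apply: lt_le_trans (x0 k.+1) _; rewrite le_max lexx.
    by rewrite ge_max ge_min (le_trans (xSk k) (xk1 k)) xk1.
  have c_mono : nondecreasing_fun c.
    by move=> u v uv; apply: le_max2 => //; apply: le_min2.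
  apply/measurable_EFinP.
  have mAB : measurable_fun (F k) (fun u => (c u)^-1 * (M (Phiinv (c u)))^-1).
    apply: measurable_funM.
      apply: nonincreasing_measurable; first exact: measurable_itv.
      move=> u v uv; rewrite lef_pV2 ?posrE ?c_mono //.
        by case/andP: (c_in v).
      by case/andP: (c_in u).
    apply: nondecreasing_measurable; first exact: measurable_itv.
    move=> u v uv; rewrite lef_pV2 ?posrE ?Mpos //.
    apply: M_mono; first exact: Phiinv_ge0.
    exact: Phiinv_dec (c_in _) (c_in _) (c_mono _ _ uv).
  apply: eq_measurable_fun mAB.
  move=> u; rewrite inE => /inF /andP[h1 h2].
  by rewrite /c (min_idPr h2) (max_idPr (ltW h1)) invfM.
have muF k : @lebesgue_measure R (F k) = (x k - x k.+1)%:E.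
  rewrite /F lebesgue_measure_itv /= lte_fin xS ifT ?EFinN ?EFinD //.
  by rewrite -xS gtr_pMr.
pose L k := (x k * M (phiinv k.+1%:R))^-1.
pose U k := (x k.+1 * M (phiinv k%:R))^-1.
have mFs k : measurable (F k) by exact: measurable_itv.
have F01 k u : F k u -> 0 < u <= 1.
  move=> /inF /andP[h1 h2]; rewrite (lt_trans (x0 _) h1) /=.
  exact: le_trans h2 (xk1 k).
have L0 k : 0 <= L k by rewrite /L invr_ge0 mulr_ge0 // ltW.
have U0 k : 0 <= U k by rewrite /U invr_ge0 mulr_ge0 // ltW.
have f0 k u : F k u -> 0 <= (u * M (Phiinv u))^-1.
  move=> /inF /andP[h1 h2]; rewrite invr_ge0 mulr_ge0 //; last exact: ltW.
  exact: ltW (lt_trans (x0 _) h1).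
have intF_ge k : ((L k * (x k - x k.+1))%:E <=
    \int[@lebesgue_measure R]_(u in F k) ((u * M (Phiinv u))^-1)%:E)%E.
  have -> : (L k * (x k - x k.+1))%:E = ((L k)%:E * @lebesgue_measure R (F k))%E.
    by rewrite muF.
  have -> : ((L k)%:E * @lebesgue_measure R (F k) =
      \int[@lebesgue_measure R]_(u in F k) (cst (L k)%:E) u)%E.
    by rewrite integral_cst //; exact: measurable_itv.
  apply: ge0_le_integral.
  - exact: measurable_itv.
  - by move=> u _; rewrite lee_fin.
  - exact: measurable_cst.
  - exact: mF k.
  - move=> u /[dup] Fu /inF /andP[h1 h2]; rewrite lee_fin /L lef_pV2 ?posrE ?mulr_gt0 //; last first.
      exact: lt_trans (x0 _) h1.
    apply: ler_pM => //; first exact: ltW (lt_trans (x0 _) h1).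
      exact: ltW.
    apply: M_mono; first exact: Phiinv_ge0 (F01 _ _ Fu).
    by case/andP: (Phiinv_F _ _ Fu).
have intF_le k : (\int[@lebesgue_measure R]_(u in F k) ((u * M (Phiinv u))^-1)%:E <=
    (U k * (x k - x k.+1))%:E)%E.
  have -> : (U k * (x k - x k.+1))%:E = ((U k)%:E * @lebesgue_measure R (F k))%E.
    by rewrite muF.
  have -> : ((U k)%:E * @lebesgue_measure R (F k) =
      \int[@lebesgue_measure R]_(u in F k) (cst (U k)%:E) u)%E.
    by rewrite integral_cst //; exact: measurable_itv.
  apply: ge0_le_integral.
  - exact: measurable_itv.
  - by move=> u Fu; rewrite lee_fin (f0 k).
  - exact: mF k.
  - exact: measurable_cst.
  - move=> u /[dup] Fu /inF /andP[h1 h2]; rewrite lee_fin /U lef_pV2 ?posrE ?mulr_gt0 //; last first.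
      exact: lt_trans (x0 _) h1.
    apply: ler_pM.
    + exact: ltW (x0 _).
    + exact: ltW (Mpos _).
    + exact: ltW.
    + apply: M_mono; first exact: phiinv_ge0.
      by case/andP: (Phiinv_F _ _ Fu).
pose a k := (M (phiinv k%:R))^-1.
have a0 k : 0 <= a k by rewrite /a invr_ge0 ltW.
have eL k : L k * (x k - x k.+1) = (1 - q) * a k.+1.
  rewrite /L /a -xS; have := x0 k; have := Mpos (phiinv k.+1%:R).
  by move=> h1 h2; field; apply/andP; split; rewrite gt_eqF.
have eU k : U k * (x k - x k.+1) = ((1 - q) / q) * a k.
  rewrite /U /a -xS; have := x0 k; have := Mpos (phiinv k%:R).
  by move=> h1 h2; field; rewrite !gt_eqF.
have mD : measurable_fun (\bigcup_k F k)
    (fun u : R => ((u * M (Phiinv u))^-1)%:E).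
  by apply/measurable_fun_bigcup => // k; exact: mF.
have eInt : (\int[@lebesgue_measure R]_(u in `]0%R, 1%R] : set R)
      ((u * M (Phiinv u))^-1)%:E =
    \sum_(k <oo) \int[@lebesgue_measure R]_(u in F k) ((u * M (Phiinv u))^-1)%:E)%E.
  rewrite bigF ge0_integral_bigcup //.
  by move=> u [k _ Fu]; rewrite lee_fin (f0 k).
rewrite eInt; split.
  move=> hI.
  have hle : (+oo <= ((1 - q) / q)%:E * \sum_(k <oo) (a k)%:E)%E.
    rewrite -hI -nneseriesZl; last by move=> i _; rewrite lee_fin.
    apply: lee_nneseries => [k _ _|k _].
      by apply: integral_ge0 => u Fu; rewrite lee_fin (f0 k).
    by rewrite -EFinM -eU; exact: intF_le.
  rewrite (nneseries_recl (P := xpredT)) // in hle; last by move=> k _; rewrite lee_fin.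
  have S0 : (0 <= \sum_(1 <= k <oo) (a k)%:E)%E.
    by apply: nneseries_ge0 => n _ _; rewrite lee_fin.
  move: hle S0; rewrite /a /M.
  case: (\sum_(1 <= k <oo) _)%E => [r| |] //.
move=> hS; apply/eqP; rewrite -leye_eq.
have <- : (((1 - q)%:E * \sum_(1 <= n <oo) (a n)%:E) = +oo)%E.
  by rewrite /a /M hS gt0_muley // lte_fin subr_gt0.
rewrite -(@nneseries_addn R (fun n => (a n)%:E) 1); last by move=> i; rewrite lee_fin.
rewrite -nneseriesZl; last by move=> i _; rewrite lee_fin.
apply: lee_nneseries => [k _ _|k _].
  by rewrite -EFinM lee_fin mulr_ge0 // subr_ge0 ltW.
by rewrite -EFinM addn1 -eL; exact: intF_ge.
Qed.
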